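(* Let $\mathcal{G}$ be a linear $3$-partite $3$-graph with vertex classes $\mathcal{A},\mathcal{B},\mathcal{C}$ (every hyperedge has exactly one vertex in each class). Let $G$ be a simple bipartite graph with parts $A=\binom{\mathcal{A}}{2}$ and $B=\binom{\mathcal{B}}{2}$ such that for every edge of $G$ between $\{a_1,a_2\}\in A$ and $\{b_1,b_2\}\in B$ there is some $c\in\mathcal{C}$ with $a_1b_1c,\ a_2b_2c\in E(\mathcal{G})$, or there is some $c'\in\mathcal{C}$ with $a_1b_2c',\ a_2b_1c'\in E(\mathcal{G})$. Let $k\ge t\ge 4$ be integers, and suppose $F$ is a $2$-degenerate subgraph of $G$ with $k$ vertices and $2k-t$ edges. Then $\mathcal{G}$ contains a subgraph $\mathcal{F}$ such that (1) $|V(\mathcal{F})|-4t\le |E(\mathcal{F})|\le 4k$, and (2) either $|E(\mathcal{F})|\ge 4k-10^4t^3$ or $|E(\mathcal{F})|\ge |V(\mathcal{F})|>0$.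
   Context: A $3$-graph is linear if any two distinct hyperedges share at most one vertex. A graph is $2$-degenerate if its vertices can be ordered $v_1,\dots,v_k$ so that each $v_i$ has at most $2$ neighbours among $v_1,\dots,v_{i-1}$. A subgraph $\mathcal{F}$ of $\mathcal{G}$ consists of a vertex set $V(\mathcal{F})\subseteq V(\mathcal{G})$ and a set $E(\mathcal{F})\subseteq E(\mathcal{G})$ of hyperedges each contained in $V(\mathcal{F})$ (isolated vertices allowed). *)

(* Defs.v *)
From mathcomp Require Import all_boot.
Set Implicit Arguments. Unset Strict Implicit. Unset Printing Implicit Defensive.

Definition three_partite (V : finType) (Ac Bc Cc : {set V})
    (E : {set {set V}}) : Prop :=
  [/\ [disjoint Ac & Bc], [disjoint Ac & Cc], [disjoint Bc & Cc],
      Ac :|: Bc :|: Cc = [set: V] &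
      forall e, e \in E ->
        [/\ #|e| = 3, #|e :&: Ac| = 1, #|e :&: Bc| = 1 & #|e :&: Cc| = 1]].

Definition linear_hg (V : finType) (E : {set {set V}}) : Prop :=
  forall e1 e2, e1 \in E -> e2 \in E -> e1 != e2 -> #|e1 :&: e2| <= 1.

Definition hsubgraph (V : finType) (E : {set {set V}})
    (VH : {set V}) (EH : {set {set V}}) : Prop :=
  EH \subset E /\ forall e, e \in EH -> e \subset VH.

Definition pairs (V : finType) (S : {set V}) : {set {set V}} :=
  [set P : {set V} | (P \subset S) && (#|P| == 2)].

Definition bipartite_graph (T : finType) (A B : {set T})
    (EG : {set {set T}}) : Prop :=
  forall e, e \in EG -> exists P Q, [/\ P \in A, Q \in B & e = [set P; Q]].

Definition gsubgraph (T : finType) (VG : {set T}) (EG : {set {set T}})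
    (VF : {set T}) (EF : {set {set T}}) : Prop :=
  [/\ VF \subset VG, EF \subset EG & forall e, e \in EF -> e \subset VF].

Definition two_degenerate (T : finType) (VF : {set T}) (EF : {set {set T}})
    : Prop :=
  exists s : seq T,
    [/\ uniq s, (forall x, (x \in s) = (x \in VF)) &
        forall s1 x s2, s = s1 ++ x :: s2 ->
          count (fun y => [set y; x] \in EF) s1 <= 2].

(* Main.v *)
Require Import Defs.
From mathcomp Require Import all_boot.
From mathcomp Require Import zify.
Set Implicit Arguments. Unset Strict Implicit. Unset Printing Implicit Defensive.

Lemma card1_eq (T : finType) (A : {set T}) x y :
  #|A| = 1 -> x \in A -> y \in A -> x = y.
Proof. by move/eqP/cards1P=> [z ->] /set1P -> /set1P ->. Qed.

Lemma card_bigcup_le (I T : finType) (P : pred I) (F : I -> {set T}) :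
  #|\bigcup_(i | P i) F i| <= \sum_(i | P i) #|F i|.
Proof.
elim/big_rec2: _ => [|i x y _ IH]; first by rewrite cards0.
by rewrite (leq_trans (leq_card_setU _ _)) // leq_add2l.
Qed.

Section Main.
Variables (V : finType) (Ac Bc Cc : {set V}) (E : {set {set V}})
  (EG : {set {set {set V}}}) (VF : {set {set V}}) (EF : {set {set {set V}}}).
Hypothesis dAB : [disjoint Ac & Bc].
Hypothesis dAC : [disjoint Ac & Cc].
Hypothesis dBC : [disjoint Bc & Cc].
Hypothesis cov : Ac :|: Bc :|: Cc = [set: V].
Hypothesis Ecard : forall e, e \in E ->
  [/\ #|e| = 3, #|e :&: Ac| = 1, #|e :&: Bc| = 1 & #|e :&: Cc| = 1].
Hypothesis Hlin : linear_hg E.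
Hypothesis Hbip : bipartite_graph (pairs Ac) (pairs Bc) EG.
Hypothesis Hwit : forall a1 a2 b1 b2 : V, a1 != a2 -> b1 != b2 ->
     [set [set a1; a2]; [set b1; b2]] \in EG ->
     (exists2 c, c \in Cc & [set a1; b1; c] \in E /\ [set a2; b2; c] \in E)
     \/ (exists2 c', c' \in Cc & [set a1; b2; c'] \in E /\ [set a2; b1; c'] \in E).
Hypothesis HVF : VF \subset pairs Ac :|: pairs Bc.
Hypothesis HEF : EF \subset EG.
Hypothesis HEFV : forall e, e \in EF -> e \subset VF.
Variable s : seq {set V}.
Hypothesis s_uniq : uniq s.
Hypothesis s_mem : forall x, (x \in s) = (x \in VF).
Hypothesis s_deg : forall s1 x s2, s = s1 ++ x :: s2 ->
  count (fun y => [set y; x] \in EF) s1 <= 2.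

Lemma tri1 (S : {set V}) x y z : x \in S -> y \notin S -> z \notin S ->
  [set x; y; z] :&: S = [set x].
Proof.
move=> xS yS zS; apply/setP=> v; rewrite !inE.
case: (eqVneq v x) => [->|_]; first by rewrite xS.
case: (eqVneq v y) => [->|_]; first by rewrite (negbTE yS).
by case: (eqVneq v z) => [->|_] //; rewrite (negbTE zS).
Qed.

Lemma tri2 (S : {set V}) x y z : x \notin S -> y \in S -> z \notin S ->
  [set x; y; z] :&: S = [set y].
Proof.
move=> xS yS zS; apply/setP=> v; rewrite !inE.
case: (eqVneq v y) => [->|_]; first by rewrite yS orbT.
case: (eqVneq v x) => [->|_]; first by rewrite (negbTE xS).
by case: (eqVneq v z) => [->|_] //; rewrite (negbTE zS).
Qed.

Lemma dis (A B : {set V}) x : [disjoint A & B] -> x \in A -> x \notin B.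
Proof. by move=> d xA; rewrite (disjointFr d xA). Qed.
Lemma dis' (A B : {set V}) x : [disjoint A & B] -> x \in B -> x \notin A.
Proof. by move=> d xB; rewrite (disjointFl d xB). Qed.

Definition good (f : {set {set V}}) (hh : {set V} * {set V}) :=
  [&& hh.1 \in E, hh.2 \in E, hh.1 != hh.2,
      f == [set (hh.1 :|: hh.2) :&: Ac; (hh.1 :|: hh.2) :&: Bc] &
      [exists c, [&& c \in Cc, c \in hh.1 & c \in hh.2]]].

Lemma mk_good f a1 a2 b1 b2 c :
  a1 \in Ac -> a2 \in Ac -> b1 \in Bc -> b2 \in Bc -> c \in Cc -> a1 != a2 ->
  [set a1; b1; c] \in E -> [set a2; b2; c] \in E ->
  f = [set [set a1; a2]; [set b1; b2]] ->
  good f ([set a1; b1; c], [set a2; b2; c]).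
Proof.
move=> a1A a2A b1B b2B cC a12 E1 E2 ->; rewrite /good /= E1 E2 /=.
apply/and3P; split.
- apply/negP=> /eqP eq12.
  have : a1 \in [set a1; b1; c] by rewrite !inE eqxx.
  rewrite eq12 !inE.
  rewrite (negbTE a12) /=; case/orP=> /eqP e.
    by move: (dis dAB a1A); rewrite e b2B.
  by move: (dis dAC a1A); rewrite e cC.
- rewrite (setIUl _ _ Ac) (setIUl _ _ Bc) (tri1 a1A (dis' dAB b1B) (dis' dAC cC)).
  rewrite (tri1 a2A (dis' dAB b2B) (dis' dAC cC)).
  rewrite (tri2 (dis dAB a1A) b1B (dis' dBC cC)).
  by rewrite (tri2 (dis dAB a2A) b2B (dis' dBC cC)).
- by apply/existsP; exists c; rewrite cC !inE !eqxx !orbT.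
Qed.

Lemma exists_good f : f \in EF -> exists hh, good f hh.
Proof.
move=> Hf; have fG := subsetP HEF f Hf.
case: (Hbip fG) => P [Q [PA QB eqf]].
move: PA QB; rewrite !inE => /andP[PsA /cards2P [a1 [a2 [a12 eP]]]].
move=> /andP[QsB /cards2P [b1 [b2 [b12 eQ]]]].
subst P Q.
have a1A : a1 \in Ac by apply: (subsetP PsA); rewrite !inE eqxx.
have a2A : a2 \in Ac by apply: (subsetP PsA); rewrite !inE eqxx orbT.
have b1B : b1 \in Bc by apply: (subsetP QsB); rewrite !inE eqxx.
have b2B : b2 \in Bc by apply: (subsetP QsB); rewrite !inE eqxx orbT.
rewrite eqf in fG.
case: (Hwit a12 b12 fG) => [[c cC [E1 E2]] | [c cC [E1 E2]]].
  by exists ([set a1; b1; c], [set a2; b2; c]); apply: mk_good.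
exists ([set a1; b2; c], [set a2; b1; c]); apply: mk_good => //.
by rewrite eqf [[set b1; b2]]setUC.
Qed.

Definition hw f := odflt (set0, set0) [pick hh | good f hh].
Definition h1 f := (hw f).1.
Definition h2 f := (hw f).2.
Definition X f := h1 f :|: h2 f.

Lemma hw_good f : f \in EF -> good f (hw f).
Proof.
move=> Hf; rewrite /hw; case: pickP => [hh //|none].
by case: (exists_good Hf) => hh; rewrite none.
Qed.

Lemma h1E f : f \in EF -> h1 f \in E.
Proof. by move/hw_good/and5P=> []. Qed.
Lemma h2E f : f \in EF -> h2 f \in E.
Proof. by move/hw_good/and5P=> []. Qed.
Lemma h12 f : f \in EF -> h1 f != h2 f.
Proof. by move/hw_good/and5P=> []. Qed.
Lemma fX f : f \in EF -> f = [set X f :&: Ac; X f :&: Bc].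
Proof. by move/hw_good/and5P=> [_ _ _ /eqP]. Qed.
Lemma cen f : f \in EF -> exists2 c, c \in Cc & c \in h1 f /\ c \in h2 f.
Proof.
move/hw_good/and5P=> [_ _ _ _ /existsP [c /and3P[? ? ?]]]; by exists c.
Qed.

Lemma VF_side P : P \in VF -> ((P \subset Ac) || (P \subset Bc)) /\ #|P| = 2.
Proof.
move/(subsetP HVF); rewrite !inE => /orP[/andP[-> /eqP ->]|/andP[-> /eqP ->]];
  by rewrite ?orbT.
Qed.

Lemma uniq_side h P u u' : h \in E -> P \in VF -> u \in P -> u' \in P ->
  u \in h -> u' \in h -> u = u'.
Proof.
move=> hE PV uP u'P uh u'h; case: (Ecard hE) => _ hA hB _.
case: (VF_side PV) => /orP[PA|PB] _.
  by apply: (card1_eq hA); rewrite inE ?uh ?u'h (subsetP PA).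
by apply: (card1_eq hB); rewrite inE ?uh ?u'h (subsetP PB).
Qed.

Lemma notC P u : P \in VF -> u \in P -> u \notin Cc.
Proof.
move=> PV uP; case: (VF_side PV) => /orP[PA|PB] _.
  exact: (dis dAC (subsetP PA u uP)).
exact: (dis dBC (subsetP PB u uP)).
Qed.

Lemma P_sub_X f P : f \in EF -> P \in f -> P \subset X f.
Proof.
by move=> Hf; rewrite {1}(fX Hf) => /set2P [->|->]; apply: subsetIl.
Qed.

Lemma in_some_Q f v : f \in EF -> v \in X f -> v \notin Cc ->
  exists2 Q, Q \in f & v \in Q.
Proof.
move=> Hf vX vC.
have : v \in Ac :|: Bc :|: Cc by rewrite cov inE.
rewrite !inE (negbTE vC) orbF => /orP[vA|vB].
  exists (X f :&: Ac); last by rewrite inE vX vA.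
  by rewrite {2}(fX Hf) !inE eqxx.
exists (X f :&: Bc); last by rewrite inE vX vB.
by rewrite {2}(fX Hf) !inE eqxx orbT.
Qed.

Lemma f_shape f : f \in EF -> exists P1 P2,
  [/\ P1 != P2, P1 \in VF, P2 \in VF & f = [set P1; P2]].
Proof.
move=> Hf; exists (X f :&: Ac), (X f :&: Bc).
have s1 : X f :&: Ac \in f by rewrite {2}(fX Hf) !inE eqxx.
have s2 : X f :&: Bc \in f by rewrite {2}(fX Hf) !inE eqxx orbT.
have V1 := subsetP (HEFV Hf) _ s1; have V2 := subsetP (HEFV Hf) _ s2.
split=> //; last exact: fX.
apply/eqP=> e; case: (VF_side V1) => _ c2.
have : 0 < #|X f :&: Ac| by rewrite c2.
case/card_gt0P=> x xA; have xB : x \in X f :&: Bc by rewrite -e.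
move: xA xB; rewrite !inE => /andP[_ xA] /andP[_ xB].
by move: (dis dAB xA); rewrite xB.
Qed.

Definition EH := \bigcup_(f in EF) [set h1 f; h2 f].
Definition U := \bigcup_(P in VF) P.
Definition Cp := Cc :&: \bigcup_(h in EH) h.
Definition VH := U :|: Cp.

Lemma EH_sub : EH \subset E.
Proof.
apply/subsetP=> h /bigcupP [f Hf]; rewrite !inE => /orP[] /eqP ->.
  exact: h1E. exact: h2E.
Qed.

Lemma EH_card : #|EH| <= 2 * #|EF|.
Proof.
rewrite (leq_trans (card_bigcup_le _ _)) // mulnC -sum_nat_const.
by apply: leq_sum => f _; rewrite cards2; case: (_ != _).
Qed.

Lemma h_in_X f h : h \in [set h1 f; h2 f] -> h \subset X f.
Proof. by rewrite !inE => /orP[] /eqP ->; [apply: subsetUl | apply: subsetUr]. Qed.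

Lemma EH_VH h : h \in EH -> h \subset VH.
Proof.
move=> hEH; have := hEH; case/bigcupP=> f Hf hf.
apply/subsetP=> v vh; rewrite !inE.
case vC: (v \in Cc).
  by rewrite orbC; apply/orP; left; apply/bigcupP; exists h.
have vX : v \in X f by apply: (subsetP (h_in_X hf)).
case: (in_some_Q Hf vX (negbT vC)) => Q Qf vQ.
by apply/orP; left; apply/bigcupP; exists Q => //; apply: (subsetP (HEFV Hf)).
Qed.

Lemma U_card_pos : VF != set0 -> 0 < #|VH|.
Proof.
case/set0Pn=> P PV; case: (VF_side PV) => _ c2.
have : 0 < #|P| by rewrite c2.
case/card_gt0P=> x xP; apply/card_gt0P; exists x.
by rewrite !inE; apply/orP; left; apply/bigcupP; exists P.
Qed.

Lemma VH_card : #|VH| <= #|U| + #|Cp|.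
Proof. by rewrite cardsU leq_subr. Qed.

Definition Hc c := [set h in EH | c \in h].
Definition m c := #|Hc c|.

Lemma h_EH f h : f \in EF -> h \in [set h1 f; h2 f] -> h \in EH.
Proof. by move=> Hf hf; apply/bigcupP; exists f. Qed.

Lemma cen_unique f h c : f \in EF -> h \in [set h1 f; h2 f] -> c \in Cc ->
  c \in h -> c \in h1 f /\ c \in h2 f.
Proof.
move=> Hf hf cC ch; case: (cen Hf) => c0 c0C [c01 c02].
have hE : h \in E by apply: (subsetP EH_sub); apply: h_EH hf.
case: (Ecard hE) => _ _ _ hC.
have c0h : c0 \in h by move: hf; rewrite !inE => /orP[] /eqP ->.
have -> // : c = c0 by apply: (card1_eq hC); rewrite inE ?ch ?c0h.
Qed.

Lemma m_ge2 c : c \in Cp -> 2 <= m c.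
Proof.
rewrite inE => /andP[cC /bigcupP [h /bigcupP [f Hf hf] ch]].
case: (cen_unique Hf hf cC ch) => c1 c2.
have -> : 2 = #|[set h1 f; h2 f]| by rewrite cards2 h12.
apply: subset_leq_card; apply/subsetP=> h' hh'; rewrite inE (h_EH Hf hh') /=.
by move: hh'; rewrite !inE => /orP[] /eqP ->.
Qed.

Lemma Cp_h h : h \in EH -> Cp :&: h = h :&: Cc.
Proof.
move=> hEH; apply/setP=> v; rewrite !inE.
case vh: (v \in h); last by rewrite !andbF.
have -> : v \in \bigcup_(h in EH) h by apply/bigcupP; exists h.
by rewrite !andbT.
Qed.

Lemma sum_m : \sum_(c in Cp) m c = #|EH|.
Proof.
have E1 c : m c = \sum_(h in EH) (c \in h).
  rewrite /m /Hc -sum1dep_card big_mkcondr /=.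
  by apply: eq_bigr => h _; case: (c \in h).
rewrite (eq_bigr _ (fun c _ => E1 c)) exchange_big /= -sum1_card.
apply: eq_bigr => h hEH.
have hE : h \in E by apply: (subsetP EH_sub).
case: (Ecard hE) => _ _ _ <-; rewrite -Cp_h // -sum1dep_card big_mkcondr /=.
rewrite big_mkcond /=; apply: eq_bigr => c _.
by rewrite inE; case: (c \in Cp); case: (c \in h).
Qed.

Lemma X_cover f : X f = \bigcup_(h in [set h1 f; h2 f]) h.
Proof.
apply/setP=> v; rewrite /X inE; apply/orP/bigcupP.
  by case=> vh; [exists (h1 f) | exists (h2 f)]; rewrite // !inE eqxx ?orbT.
by case=> h; rewrite !inE => /orP[] /eqP -> vh; [left|right].
Qed.

Lemma X_inj f f' : f \in EF -> f' \in EF -> X f = X f' -> f = f'.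
Proof. by move=> Hf Hf' e; rewrite (fX Hf) (fX Hf') e. Qed.

Lemma EF_le : #|EF| <= \sum_(c in Cp) 'C(m c, 2).
Proof.
pose p f := [set h1 f; h2 f].
have pinj : {in EF &, injective p}.
  by move=> f f' Hf Hf' e; apply: X_inj => //; rewrite !X_cover -/(p f) e.
rewrite -(card_in_imset pinj).
apply: (@leq_trans (\sum_(c in Cp) #|pairs (Hc c)|)); last first.
  by apply: eq_leq; apply: eq_bigr => c _; rewrite /pairs cards_draws.
apply: (leq_trans _ (card_bigcup_le (fun c => c \in Cp) (fun c => pairs (Hc c)))).
apply: subset_leq_card; apply/subsetP=> P /imsetP [f Hf ->].
case: (cen Hf) => c cC [c1 c2].
have h1EH : h1 f \in EH by apply: (h_EH Hf); rewrite !inE eqxx.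
apply/bigcupP; exists c.
  by rewrite inE cC; apply/bigcupP; exists (h1 f).
rewrite /pairs inE /p cards2 h12 // andbT.
apply/subsetP=> h hh; rewrite inE (h_EH Hf hh).
by move: hh; rewrite !inE => /orP[] /eqP ->.
Qed.

Lemma EF_le' : #|EF| <= \sum_(c in Cp) 'C(m c, 2).
Proof. exact: EF_le. Qed.

Definition Pu (u : V) := nth set0 s (find (fun P : {set V} => u \in P) s).

Lemma Pu_in u : u \in U -> Pu u \in VF /\ u \in Pu u.
Proof.
case/bigcupP=> P PV uP.
have hs : has (fun P : {set V} => u \in P) s by apply/hasP; exists P; rewrite ?s_mem.
split; last exact: (nth_find set0 hs).
by rewrite -s_mem /Pu mem_nth // -has_find.
Qed.

Lemma Pu_min u Q : Q \in VF -> u \in Q -> index (Pu u) s <= index Q s.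
Proof.
move=> QV uQ; have Qs : Q \in s by rewrite s_mem.
have hs : has (fun P : {set V} => u \in P) s by apply/hasP; exists Q.
rewrite /Pu index_uniq // -?has_find //.
rewrite leqNgt; apply/negP=> /(before_find set0).
by rewrite nth_index // uQ.
Qed.

Definition back P := [set f in EF | (P \in f) && [forall Q in f, index Q s <= index P s]].
Definition b P := #|back P|.

Lemma backP P f : f \in back P ->
  [/\ f \in EF, P \in f & forall Q, Q \in f -> index Q s <= index P s].
Proof.
rewrite inE => /andP[Hf /andP[Pf /forallP H]]; split=> // Q Qf.
by move: (H Q); rewrite Qf.
Qed.

Lemma EF_back : #|EF| <= \sum_(P in VF) b P.
Proof.
apply: (leq_trans _ (card_bigcup_le (fun P => P \in VF) back)).
apply: subset_leq_card; apply/subsetP=> f Hf.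
case: (f_shape Hf) => P1 [P2 [_ V1 V2 ef]].
have mem : forall Q, Q \in f -> Q = P1 \/ Q = P2.
  by move=> Q; rewrite ef => /set2P.
case: (leqP (index P1 s) (index P2 s)) => le12.
  apply/bigcupP; exists P2 => //; rewrite inE Hf ef !inE eqxx orbT /=.
  apply/forallP=> Q; apply/implyP; rewrite -ef => /mem [->|->] //.
apply/bigcupP; exists P1 => //; rewrite inE Hf ef !inE eqxx /=.
apply/forallP=> Q; apply/implyP; rewrite -ef => /mem [->|->] //.
exact: ltnW.
Qed.

Lemma back_le2 P : P \in VF -> b P <= 2.
Proof.
move=> PV; have Ps : P \in s by rewrite s_mem.
pose i := index P s.
have sdec : s = take i s ++ P :: drop i.+1 s.
  by rewrite -{1}(cat_take_drop i s) (drop_nth set0) ?index_mem // nth_index.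
apply: (leq_trans _ (s_deg sdec)).
pose fs := [seq y <- take i s | [set y; P] \in EF].
apply: (@leq_trans #|(fun y => [set y; P]) @: [set y | y \in fs]|).
  apply: subset_leq_card; apply/subsetP=> f fb.
  case: (backP fb) => Hf Pf Hle.
  case: (f_shape Hf) => P1 [P2 [n12 V1 V2 ef]].
  have [y [yV yP efy]] : exists y, [/\ y \in VF, y != P & f = [set y; P]].
    move: Pf; rewrite ef => /set2P [eP|eP].
      by exists P2; rewrite eP eq_sym n12 setUC.
    by exists P1; rewrite eP n12.
  apply/imsetP; exists y => //; rewrite inE mem_filter -efy Hf /=.
  have ys : y \in s by rewrite s_mem.
  rewrite in_take // ltn_neqAle Hle ?efy ?inE ?eqxx // andbT.
  by apply: contra yP => /eqP e; apply/eqP; apply: (index_inj set0 ys Ps).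
apply: (leq_trans (leq_imset_card _ _)).
by rewrite cardsE (leq_trans (card_size _)) // size_filter.
Qed.

Lemma sum_defect :
  \sum_(u in U) (2 - b (Pu u)) <= 2 * \sum_(P in VF) (2 - b P).
Proof.
rewrite (partition_big Pu (fun P => P \in VF)); last by move=> u /Pu_in [].
rewrite big_distrr /=; apply: leq_sum => P PV.
rewrite (eq_bigr (fun _ => 2 - b P)); last by move=> u /andP[_ /eqP ->].
rewrite (eq_bigl (fun u => u \in [set u | (u \in U) && (Pu u == P)]));
  last by move=> u; rewrite inE.
rewrite sum_nat_const leq_mul2r; apply/orP; right.
case: (VF_side PV) => _ <-; apply: subset_leq_card; apply/subsetP=> u.
by rewrite inE => /andP[uU /eqP <-]; case: (Pu_in uU).
Qed.

Definition T := [set x : V * {set {set V}} | (x.1 \in U) && (x.2 \in back (Pu x.1))].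

Lemma card_T : #|T| = \sum_(u in U) b (Pu u).
Proof.
rewrite -sum1_card (partition_big fst (fun u => u \in U)); last first.
  by move=> x; rewrite inE => /andP[].
apply: eq_bigr => u uU; rewrite sum1dep_card /b.
rewrite -[RHS](card_imset _ (fun a b (e : (u, a) = (u, b)) => congr1 snd e)).
apply: eq_card => -[v f]; rewrite !inE /=.
apply/idP/imsetP => [/andP[/andP[vU fb] /eqP ev]|[f' f'b [-> ->]]].
  by subst v; exists f => //; rewrite inE.
by rewrite uU eqxx andbT; move: f'b; rewrite inE.
Qed.

Definition g (x : V * {set {set V}}) :=
  if x.1 \in h1 x.2 then h1 x.2 else h2 x.2.
Definition o (x : V * {set {set V}}) :=
  if x.1 \in h1 x.2 then h2 x.2 else h1 x.2.

Lemma T_facts1 x : x \in T ->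
  [/\ x.1 \in U, Pu x.1 \in VF & x.1 \in Pu x.1].
Proof.
rewrite inE => /andP[uU fb]; case: (Pu_in uU) => PV uP.
by split.
Qed.
Lemma T_facts2 x : x \in T ->
  [/\ x.2 \in EF, Pu x.1 \in x.2 &
      (forall Q, Q \in x.2 -> index Q s <= index (Pu x.1) s)].
Proof. by rewrite inE => /andP[uU /backP]. Qed.

Lemma g_mem x : x \in T ->
  [/\ g x \in [set h1 x.2; h2 x.2], o x \in [set h1 x.2; h2 x.2],
      x.1 \in g x & X x.2 = g x :|: o x].
Proof.
move=> Tx; case: (T_facts1 Tx) => _ _ uP; case: (T_facts2 Tx) => Hf Pf _.
have uX : x.1 \in X x.2 by apply: (subsetP (P_sub_X Hf Pf)).
rewrite /g /o; case: ifP => u1; rewrite !inE !eqxx ?orbT //; split=> //.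
  by move: uX; rewrite /X inE u1.
by rewrite /X setUC.
Qed.

Lemma g_lt x x' : x \in T -> x' \in T -> g x = g x' -> x.1 != x'.1 ->
  index (Pu x'.1) s < index (Pu x.1) s.
Proof.
move=> Tx Tx' e ne.
case: (T_facts1 Tx) => uU PV uP; case: (T_facts2 Tx) => Hf Pf Hle.
case: (T_facts1 Tx') => u'U P'V u'P; case: (T_facts2 Tx') => Hf' _ _.
case: (g_mem Tx) => gf _ ug _.
case: (g_mem Tx') => _ _ u'g _.
rewrite -e in u'g.
have gE : g x \in E by apply: (subsetP EH_sub); apply: h_EH gf.
have u'X : x'.1 \in X x.2 by apply: (subsetP (h_in_X gf)).
case: (in_some_Q Hf u'X (notC P'V u'P)) => Q Qf u'Q.
have QV : Q \in VF by apply: (subsetP (HEFV Hf)).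
have nQ : Q != Pu x.1.
  apply/eqP=> eQ; rewrite eQ in u'Q; move/negP: ne; apply; apply/eqP.
  exact: (uniq_side gE PV uP u'Q ug u'g).
apply: (leq_ltn_trans (Pu_min QV u'Q)).
rewrite ltn_neqAle Hle // andbT; apply: contra nQ => /eqP ei; apply/eqP.
by apply: (index_inj set0 _ _ ei); rewrite s_mem.
Qed.

Lemma two_elem (P : {set V}) u : #|P| = 2 -> u \in P -> exists2 y, y \in P & y != u.
Proof.
move=> c2 uP; have : 0 < #|P :\ u| by move: (cardsD1 u P); rewrite c2 uP add1n => -[<-].
by case/card_gt0P=> y; rewrite !inE => /andP[yu yP]; exists y.
Qed.

Lemma g_same x x' : x \in T -> x' \in T -> g x = g x' -> x.1 = x'.1 -> x.2 = x'.2.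
Proof.
move=> Tx Tx' e e1.
case: (T_facts1 Tx) => uU PV uP; case: (T_facts2 Tx) => Hf Pf _.
case: (T_facts2 Tx') => Hf' Pf' _.
rewrite -e1 in Pf'.
case: (g_mem Tx) => gf ofx ug Xf.
case: (g_mem Tx') => gf' ofx' _ Xf'.
have gE : g x \in E by apply: (subsetP EH_sub); apply: h_EH gf.
have oE : o x \in E by apply: (subsetP EH_sub); apply: h_EH ofx.
have oE' : o x' \in E by apply: (subsetP EH_sub); apply: h_EH ofx'.
have cen_go : forall z, z \in T -> exists2 c, c \in Cc & c \in g z /\ c \in o z.
  move=> z /T_facts2 [Hz _ _]; case: (cen Hz) => c cC [c1 c2].
  by exists c => //; rewrite /g /o; case: ifP.
case: (cen_go x Tx) => c cC [cg co].
case: (cen_go x' Tx') => c' c'C [cg' co'].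
rewrite -e in cg'.
have ecc : c' = c.
  by case: (Ecard gE) => _ _ _ hC; apply: (card1_eq hC); rewrite inE ?cg ?cg'.
rewrite ecc in co'.
case: (VF_side PV) => _ c2; case: (two_elem c2 uP) => y yP yu.
have yg : y \notin g x.
  by apply/negP=> yg; move/eqP: yu; apply; apply: (uniq_side gE PV yP uP yg ug).
have yX : y \in X x.2 by apply: (subsetP (P_sub_X Hf Pf)).
have yX' : y \in X x'.2 by apply: (subsetP (P_sub_X Hf' Pf')).
have yo : y \in o x by move: yX; rewrite Xf inE (negbTE yg).
have yo' : y \in o x' by move: yX'; rewrite Xf' inE -e (negbTE yg).
have eo : o x = o x'.
  apply/eqP; apply/negP=> /negP ne.
  have := Hlin oE oE' ne.
  have yc : y != c by apply: contraNneq (notC PV yP) => ->.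
  have : #|[set y; c]| <= #|o x :&: o x'|.
    by apply: subset_leq_card; apply/subsetP=> z; rewrite !inE => /orP[] /eqP ->;
      rewrite ?yo ?yo' ?co ?co'.
  by rewrite cards2 yc => /leq_trans H /H.
by apply: X_inj => //; rewrite Xf Xf' e eo.
Qed.

Lemma sum_b_le : \sum_(u in U) b (Pu u) <= #|EH|.
Proof.
rewrite -card_T.
have ginj : {in T &, injective g}.
  move=> [u f] [u' f'] Tx Tx' e.
  case: (eqVneq u u') => [e1|ne].
    by congr (_, _) => //; apply: (g_same Tx Tx' e e1).
  have l1 := g_lt Tx Tx' e ne.
  have ne' : u' != u by rewrite eq_sym.
  have l2 := g_lt Tx' Tx (esym e) ne'.
  by move: l1; rewrite ltnNge (ltnW l2).
rewrite -(card_in_imset ginj); apply: subset_leq_card.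
apply/subsetP=> h /imsetP [x Tx ->].
case: (g_mem Tx) => gf _ _ _; apply: (h_EH _ gf).
by case: (T_facts2 Tx).
Qed.

Lemma key : 2 * #|U| + 2 * #|EF| <= #|EH| + 4 * #|VF|.
Proof.
have e1 : \sum_(u in U) 2 = \sum_(u in U) b (Pu u) + \sum_(u in U) (2 - b (Pu u)).
  rewrite -big_split; apply: eq_bigr => u uU; apply/esym/subnKC.
  by apply: back_le2; case: (Pu_in uU).
have e2 : \sum_(P in VF) 2 = \sum_(P in VF) b P + \sum_(P in VF) (2 - b P).
  by rewrite -big_split; apply: eq_bigr => P PV; apply/esym/subnKC/back_le2.
rewrite !sum_nat_const in e1 e2.
have := sum_defect; have := sum_b_le; have := EF_back; lia.
Qed.

Definition Y := \sum_(c in Cp) (m c - 2).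

Lemma EH_Y : #|EH| = Y + 2 * #|Cp|.
Proof.
rewrite -sum_m /Y mulnC -sum_nat_const -big_split; apply: eq_bigr => c cC.
by apply/esym/subnK/m_ge2.
Qed.

Lemma EF_Y : 2 * #|EF| <= #|EH| + (Y + 2) * Y.
Proof.
apply: (@leq_trans (2 * \sum_(c in Cp) 'C(m c, 2))); first by rewrite leq_mul2l EF_le.
rewrite big_distrr /=.
apply: (@leq_trans (\sum_(c in Cp) (m c + (Y + 2) * (m c - 2)))).
  apply: leq_sum => c cC.
  have mY : m c - 2 <= Y by rewrite /Y (bigD1 c) //= leq_addr.
  have m2 := m_ge2 cC.
  have h := bin_ffact (m c) 2; rewrite ffactnS ffactn1 -subn1 in h.
  have f2 : 2`! = 2 by [].
  rewrite f2 in h; nia.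
rewrite big_split /= -big_distrr /= sum_m.
by rewrite /Y.
Qed.

Lemma final k t : 4 <= t -> t <= k -> #|VF| = k -> #|EF| = 2 * k - t ->
  exists (VH : {set V}) (EH : {set {set V}}),
    [/\ hsubgraph E VH EH,
        #|VH| <= #|EH| + 4 * t,
        #|EH| <= 4 * k &
        (4 * k <= #|EH| + 10 ^ 4 * t ^ 3) \/ (#|VH| <= #|EH| /\ 0 < #|VH|)].
Proof.
move=> t4 tk cVF cEF; exists VH, EH; rewrite /reverse_coercion.
have hk := key; have hY := EH_Y; have hF := EF_Y; have hc := EH_card.
have hV := VH_card.
have pos : 0 < #|VH| by apply: U_card_pos; rewrite -card_gt0 cVF; lia.
split.
- by split; [exact: EH_sub | exact: EH_VH].
- lia.
- lia.
case: (leqP (#|U| + #|Cp|) #|EH|) => h.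
  by right; split=> //; lia.
left.
have Yt : Y < 2 * t by lia.
have YY : (Y + 2) * Y <= (2 * t + 1) * (2 * t) by apply: leq_mul; lia.
have -> : t ^ 3 = t * t * t by rewrite !expnS expn0 muln1 mulnA.
have h4 : 4 * k <= #|EH| + 2 * t + (2 * t + 1) * (2 * t) by lia.
have h5 : 2 * t + (2 * t + 1) * (2 * t) <= 7 * (t * t * t).
  clear -t4; nia.
have h6 : 7 * (t * t * t) <= 10 ^ 4 * (t * t * t) by rewrite leq_mul2r orbC.
move: h4 h5 h6; generalize (10 ^ 4 * (t * t * t)) (7 * (t * t * t)); lia.
Qed.
End Main.

Theorem lemma2p2 (V : finType) (Ac Bc Cc : {set V}) (E : {set {set V}})
    (EG : {set {set {set V}}}) (VF : {set {set V}}) (EF : {set {set {set V}}})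
    (k t : nat) :
  three_partite Ac Bc Cc E ->
  linear_hg E ->
  bipartite_graph (pairs Ac) (pairs Bc) EG ->
  (forall a1 a2 b1 b2 : V, a1 != a2 -> b1 != b2 ->
     [set [set a1; a2]; [set b1; b2]] \in EG ->
     (exists2 c, c \in Cc & [set a1; b1; c] \in E /\ [set a2; b2; c] \in E)
     \/ (exists2 c', c' \in Cc & [set a1; b2; c'] \in E /\ [set a2; b1; c'] \in E)) ->
  4 <= t -> t <= k ->
  gsubgraph (pairs Ac :|: pairs Bc) EG VF EF ->
  two_degenerate VF EF ->
  #|VF| = k -> #|EF| = 2 * k - t ->
  exists (VH : {set V}) (EH : {set {set V}}),
    [/\ hsubgraph E VH EH,
        #|VH| <= #|EH| + 4 * t,
        #|EH| <= 4 * k &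
        (4 * k <= #|EH| + 10 ^ 4 * t ^ 3) \/ (#|VH| <= #|EH| /\ 0 < #|VH|)].
Proof.
move=> [dAB dAC dBC cov Ecard] Hlin Hbip Hwit t4 tk [HVF HEF HEFV] [s [su sm sd]] cVF cEF.
exact: (final dAB dAC dBC cov Ecard Hlin Hbip Hwit HVF HEF HEFV su sm sd t4 tk cVF cEF).
Qed.
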